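(* Let $X$ be a finite set, $\mathcal{T}_X$ the full transformation semigroup on $X$, and $(\mathcal{T}_X,\leq)$ the ordered full transformation semigroup with the natural partial order. For $f,g\in\mathcal{T}_X$, $f\,\mathscr{L}\,g$ in the ordered semigroup $(\mathcal{T}_X,\leq)$ if and only if $f\,\mathscr{L}\,g$ in the semigroup $\mathcal{T}_X$.
   Context: $\mathcal{T}_X$ is the semigroup of all maps $X\to X$ under composition, with maps written on the right and composed left to right, so that $\operatorname{Im}(\alpha g)\subseteq\operatorname{Im} g$. The natural partial order: $f\leq g$ iff $f\mathcal{T}_X^1\subseteq g\mathcal{T}_X^1$ and $f=\alpha f=\alpha g$ for some $\alpha\in\mathcal{T}_X$; with it, $(\mathcal{T}_X,\leq)$ is a regular ordered semigroup. In an ordered semigroup $S$, $a\,\mathscr{L}\,b$ iff $(a\cup Sa]=(b\cup Sb]$, where $(A]=\{x: x\leq a\text{ for some }a\in A\}$. In the plain semigroup $\mathcal{T}_X$, $\mathscr{L}$ is the usual Green's relation ($f\,\mathscr{L}\,g$ iff $\mathcal{T}_X^1 f=\mathcal{T}_X^1 g$, equivalently $\operatorname{Im}f=\operatorname{Im}g$). *)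

(* Defs.v *)
From mathcomp Require Import all_boot.
Set Implicit Arguments. Unset Strict Implicit. Unset Printing Implicit Defensive.

(* The full transformation semigroup T_X on a finite set X: maps X -> X,
   written on the right and composed left to right: (tcomp f g) x = g (f x),
   i.e. "f g" means first f, then g. *)
Definition tmap (X : finType) := {ffun X -> X}.

Definition tcomp (X : finType) (f g : tmap X) : tmap X := [ffun x => g (f x)].

Definition inRideal1 (X : finType) (f k : tmap X) : Prop :=
  k = f \/ exists h : tmap X, k = tcomp f h.

Definition inLideal1 (X : finType) (f k : tmap X) : Prop :=
  k = f \/ exists s : tmap X, k = tcomp s f.

Definition natle (X : finType) (f g : tmap X) : Prop :=
  (forall k, inRideal1 f k -> inRideal1 g k) /\
  exists alpha : tmap X, f = tcomp alpha f /\ f = tcomp alpha g.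

Definition in_down_Lideal (X : finType) (a x : tmap X) : Prop :=
  exists y, inLideal1 a y /\ natle x y.

Definition ordL (X : finType) (f g : tmap X) : Prop :=
  forall x, in_down_Lideal f x <-> in_down_Lideal g x.

Definition semL (X : finType) (f g : tmap X) : Prop :=
  forall k, inLideal1 f k <-> inLideal1 g k.

(* Main.v *)
Require Import Defs.
From mathcomp Require Import all_boot.

Lemma tcompA (X : finType) (a b c : tmap X) :
  tcomp a (tcomp b c) = tcomp (tcomp a b) c.
Proof. by apply/ffunP => x; rewrite !ffunE. Qed.

Lemma natle_refl (X : finType) (f : tmap X) : natle f f.
Proof.
split=> // ; exists [ffun x => x].
by split; apply/ffunP => x; rewrite !ffunE.
Qed.

Lemma half (X : finType) (f g : tmap X) :
  ordL f g -> forall k, inLideal1 f k -> inLideal1 g k.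
Proof.
move=> H.
have [y [Hy [_ [a [_ Ha]]]]] : in_down_Lideal g f.
  by apply/H; exists f; split; [left|apply: natle_refl].
have Hf : exists s, f = tcomp s g.
  case: Hy => [E|[s E]]; subst y; first by exists a.
  by exists (tcomp a s); rewrite Ha tcompA.
case: Hf => s Hs k [->|[t ->]]; right; first by exists s.
by exists (tcomp t s); rewrite Hs tcompA.
Qed.

Theorem mainTheorem6 (X : finType) (f g : tmap X) :
  ordL f g <-> semL f g.
Proof.
split.
  move=> H k; split; first exact: half.
  by apply: half => x; split; move/H.
move=> H x; split; case=> y [Hy Hn]; exists y; split => //; exact/H.
Qed.
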